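(* For $A\in\mathcal{M}_s(\mathbb{N}^d)$ the following are equivalent: (i) $A$ has a convolutional inverse; (ii) $A$ is row equivalent to the identity sequence $\mathbbm{I}_s$; (iii) $A$ can be written as the convolution of a finite sequence of elementary matrix sequences.
   Context: $\mathcal{M}_s(\mathbb{N}^d)$ is the set of functions $\mathbb{N}^d\to\mathbb{R}^{s\times s}$, viewed equivalently as $s\times s$ matrices of real sequences on $\mathbb{N}^d$. Convolution: $[A*B](k)=\sum_{l+l'=k,\,l,l'\in\mathbb{N}^d}A(l)B(l')$. $\mathbbm{I}_s(0_d)=I_s$ and $\mathbbm{I}_s(k)=O_s$ for $k\ne0_d$; $A$ has a convolutional inverse if $A*B=B*A=\mathbbm{I}_s$ for some $B$. A real sequence $\alpha$ is convolutionally invertible if it has a convolutional inverse for $s=1$. Elementary row operations: (1) swapping two rows; (2) replacing a row by its entrywise convolution with a convolutionally invertible real sequence; (3) replacing row $j$ by row $j$ plus row $i$ ($i\ne j$) convolved entrywise with a convolutionally invertible real sequence. An elementary matrix sequence is one obtained by a single elementary row operation from $\mathbbm{I}_s$. $A$ and $B$ are row equivalent if one can be obtained from the other by a finite sequence of elementary row operations. *)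

(* Defs.v *)
From HB Require Import structures.
From mathcomp Require Import all_boot all_order all_algebra.
From mathcomp Require Import reals.
From Stdlib Require Import Relations.
Set Implicit Arguments. Unset Strict Implicit. Unset Printing Implicit Defensive.
Import Order.TTheory GRing.Theory Num.Theory.
Local Open Scope ring_scope.

Notation idx d := {ffun 'I_d -> nat}.
Definition idx0 d : idx d := [ffun => 0%N].

(* For k in N^d, the pairs (l, l') with l + l' = k are in bijection with
   the l <= k (componentwise), l' = k - l.  Such l are enumerated as
   functions 'I_d -> 'I_(max_i k_i).+1 subject to l <= k. *)
Definition idx_bnd d (k : idx d) : nat := (\max_(i < d) k i)%N.
Definition lo d (k : idx d) (l : {ffun 'I_d -> 'I_(idx_bnd k).+1}) : idx d :=
  [ffun i => nat_of_ord (l i)].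
Definition hi d (k : idx d) (l : {ffun 'I_d -> 'I_(idx_bnd k).+1}) : idx d :=
  [ffun i => (k i - l i)%N].

Definition sum_split {V : nmodType} d (k : idx d) (F : idx d -> idx d -> V) : V :=
  \sum_(l : {ffun 'I_d -> 'I_(idx_bnd k).+1} | [forall i, (l i <= k i)%N])
     F (@lo d k l) (@hi d k l).

Section Defs.
Variable R : realType.

Definition mseq d s := idx d -> 'M[R]_s.
Definition rseq d := idx d -> R.

Definition mconv d s (A B : mseq d s) : mseq d s :=
  fun k => sum_split k (fun l l' => A l *m B l').

Definition rconv d (a b : rseq d) : rseq d :=
  fun k => sum_split k (fun l l' => a l * b l').

Definition Iseq d s : mseq d s :=
  fun k => if k == idx0 d then 1%:M else 0.

Definition has_conv_inverse d s (A : mseq d s) : Prop :=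
  exists B : mseq d s, mconv A B = @Iseq d s /\ mconv B A = @Iseq d s.

Definition rseq_invertible d (a : rseq d) : Prop :=
  has_conv_inverse (fun k => (a k)%:M : 'M[R]_1).

Inductive elem_op d s (A B : mseq d s) : Prop :=
| EOswap (i j : 'I_s) :
    (forall k, B k = xrow i j (A k)) -> elem_op A B
| EOscale (i : 'I_s) (a : rseq d) :
    rseq_invertible a ->
    (forall k, B k = \matrix_(r, c)
        (if r == i then rconv a (fun l => A l i c) k else A k r c)) ->
    elem_op A B
| EOadd (i j : 'I_s) (a : rseq d) :
    i != j -> rseq_invertible a ->
    (forall k, B k = \matrix_(r, c)
        (if r == j then A k j c + rconv a (fun l => A l i c) k else A k r c)) ->
    elem_op A B.

Definition elementary d s (E : mseq d s) : Prop := elem_op (@Iseq d s) E.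

Definition row_equiv d s (A B : mseq d s) : Prop :=
  clos_refl_trans _ (@elem_op d s) A B \/ clos_refl_trans _ (@elem_op d s) B A.

Definition mconv_list d s (Es : seq (mseq d s)) : mseq d s :=
  foldr (@mconv d s) (@Iseq d s) Es.

Definition all_elementary d s (Es : seq (mseq d s)) : Prop :=
  foldr (fun E P => @elementary d s E /\ P) True Es.

End Defs.

(* Main.v *)
Require Import Defs.
From mathcomp Require Import all_boot all_order all_algebra.
From mathcomp Require Import reals.
From Stdlib Require Import Relations FunctionalExtensionality.
From mathcomp Require Import zify perm.
Set Implicit Arguments. Unset Strict Implicit. Unset Printing Implicit Defensive.
Import Order.TTheory GRing.Theory Num.Theory.
Local Open Scope ring_scope.

Section Idx.
Variable d : nat.
Implicit Types k l m n : idx d.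

Definition leidx l k : bool := [forall i, (l i <= k i)%N].
Definition subidx k l : idx d := [ffun i => (k i - l i)%N].
Definition addidx m n : idx d := [ffun i => (m i + n i)%N].
Definition box k : seq (idx d) :=
  map (@lo d k) (enum [pred l : {ffun 'I_d -> 'I_(idx_bnd k).+1} | [forall i, (l i <= k i)%N]]).

Lemma leidxP l k : reflect (forall i, (l i <= k i)%N) (leidx l k).
Proof. exact: forallP. Qed.

Lemma box_uniq k : uniq (box k).
Proof.
rewrite map_inj_in_uniq ?enum_uniq // => x y _ _ /ffunP H.
apply/ffunP => i; apply: val_inj; have := H i; by rewrite !ffunE.
Qed.

Lemma mem_box k l : (l \in box k) = leidx l k.
Proof.
apply/idP/idP.
  case/mapP => x; rewrite mem_enum inE => /forallP Hx ->.
  by apply/forallP => i; rewrite ffunE.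
move/leidxP => H.
have Hb i : (l i < (idx_bnd k).+1)%N.
  rewrite ltnS; apply: leq_trans (H i) _; rewrite /idx_bnd.
  exact: (leq_bigmax_cond (F := fun i => k i)).
apply/mapP; exists [ffun i => Ordinal (Hb i)].
  by rewrite mem_enum inE; apply/forallP => i; rewrite ffunE /=.
by apply/ffunP => i; rewrite !ffunE.
Qed.

Lemma sum_splitE (V : nmodType) k (F : idx d -> idx d -> V) :
  sum_split k F = \sum_(l <- box k) F l (subidx k l).
Proof.
rewrite /sum_split /box big_map big_enum_cond /=.
apply: eq_big => [x|x _]; first by rewrite inE andbT.
congr (F _ _).
by apply/ffunP => i; rewrite !ffunE.
Qed.


Lemma subidx0 k : subidx k (idx0 d) = k.
Proof. by apply/ffunP => i; rewrite !ffunE subn0. Qed.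
Lemma subidxx k : subidx k k = idx0 d.
Proof. by apply/ffunP => i; rewrite !ffunE subnn. Qed.
Lemma subidxK l k : leidx l k -> subidx k (subidx k l) = l.
Proof. by move/leidxP => H; apply/ffunP => i; rewrite !ffunE subKn. Qed.
Lemma subidx_eq0 l k : leidx l k -> (subidx k l == idx0 d) = (l == k).
Proof.
move/leidxP => H; apply/eqP/eqP => [/ffunP E|->]; last exact: subidxx.
apply/ffunP => i; have := E i; rewrite !ffunE => /eqP; rewrite subn_eq0 => Hi.
by apply/eqP; rewrite eqn_leq H.
Qed.
Lemma addKidx m n : subidx (addidx m n) m = n.
Proof. by apply/ffunP => i; rewrite !ffunE addKn. Qed.
Lemma subidxD k m n : subidx k (addidx m n) = subidx (subidx k m) n.
Proof. by apply/ffunP => i; rewrite !ffunE subnDA. Qed.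
Lemma le0idx k : leidx (idx0 d) k.
Proof. by apply/leidxP => i; rewrite ffunE. Qed.
Lemma leidxx k : leidx k k.
Proof. by apply/leidxP. Qed.
Lemma leidx_trans m l k : leidx m l -> leidx l k -> leidx m k.
Proof. by move=> /leidxP H1 /leidxP H2; apply/leidxP => i; exact: leq_trans (H1 i) (H2 i). Qed.
Lemma leidx_sub l k : leidx (subidx k l) k.
Proof. by apply/leidxP => i; rewrite ffunE leq_subr. Qed.
Lemma leidx0 k : leidx k (idx0 d) -> k = idx0 d.
Proof. by move/leidxP => H; apply/ffunP => i; have := H i; rewrite !ffunE leqn0 => /eqP. Qed.

Lemma sum_split_perm (V : nmodType) k S (F : idx d -> idx d -> V) :
  uniq S -> (forall l, (l \in S) = leidx l k) ->
  sum_split k F = \sum_(l <- S) F l (subidx k l).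
Proof.
move=> uS HS; rewrite sum_splitE; apply: perm_big; apply: uniq_perm => //.
  exact: box_uniq.
by move=> l; rewrite mem_box HS.
Qed.

Lemma sum_split_unitl (V : nmodType) k (f : idx d -> V) :
  sum_split k (fun l l' => if l == idx0 d then f l' else 0) = f k.
Proof.
rewrite sum_splitE (bigD1_seq (idx0 d)) ?box_uniq ?mem_box ?le0idx //=.
rewrite eqxx subidx0 big1 ?addr0 // => i /negbTE ->; done.
Qed.

Lemma sum_split_unitr (V : nmodType) k (f : idx d -> V) :
  sum_split k (fun l l' => if l' == idx0 d then f l else 0) = f k.
Proof.
rewrite sum_splitE (bigD1_seq k) ?box_uniq ?mem_box ?leidxx //=.
rewrite subidxx eqxx big_seq_cond big1 ?addr0 // => i /andP [].
by rewrite mem_box => Hi Hik; rewrite subidx_eq0 // (negbTE Hik).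
Qed.

Lemma sum_split_comm (V : nmodType) k (F : idx d -> idx d -> V) :
  sum_split k F = sum_split k (fun l l' => F l' l).
Proof.
rewrite [RHS](@sum_split_perm _ k (map (subidx k) (box k))).
- rewrite big_map sum_splitE big_seq [RHS]big_seq; apply: eq_bigr => l.
  by rewrite mem_box => Hl; rewrite subidxK.
- rewrite map_inj_in_uniq ?box_uniq // => x y; rewrite !mem_box => Hx Hy E.
  by rewrite -(subidxK Hx) E subidxK.
- move=> l; apply/mapP/idP => [[x _ ->]|Hl]; first exact: leidx_sub.
  by exists (subidx k l); rewrite ?mem_box ?leidx_sub ?subidxK.
Qed.

Lemma sum_split0 (V : nmodType) (F : idx d -> idx d -> V) :
  sum_split (idx0 d) F = F (idx0 d) (idx0 d).
Proof.
rewrite (@sum_split_perm _ _ [:: idx0 d]) ?big_seq1 ?subidx0 //.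
move=> l; rewrite inE; apply/eqP/idP => [->|]; first exact: le0idx.
exact: leidx0.
Qed.

Lemma sum_split_assoc (V : nmodType) k (f : idx d -> idx d -> idx d -> V) :
  sum_split k (fun l l' => sum_split l (fun m m' => f m m' l')) =
  sum_split k (fun m r => sum_split r (fun n o => f m n o)).
Proof.
have E1 : forall l, l \in box k ->
   sum_split l (fun m m' => f m m' (subidx k l)) =
   \sum_(m <- box k | leidx m l) f m (subidx l m) (subidx k l).
  move=> l; rewrite mem_box => Hl; rewrite -big_filter; apply: sum_split_perm.
    by rewrite filter_uniq ?box_uniq.
  move=> m; rewrite mem_filter mem_box; apply/andP/idP => [[]//|H].
  by split => //; exact: leidx_trans H Hl.
rewrite sum_splitE big_seq (eq_bigr _ E1) -big_seq.
rewrite (exchange_big_dep xpredT) //= sum_splitE big_seq [RHS]big_seq.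
apply: eq_bigr => m; rewrite mem_box => Hm.
rewrite -big_filter.
rewrite (@sum_split_perm _ (subidx k m) (box (subidx k m))) ?box_uniq //; last by move=> l; rewrite mem_box.
have Hp : perm_eq [seq x <- box k | leidx m x] (map (addidx m) (box (subidx k m))).
  apply: uniq_perm.
  - by rewrite filter_uniq ?box_uniq.
  - rewrite map_inj_in_uniq ?box_uniq // => x y _ _ E.
    by rewrite -(addKidx m x) E addKidx.
  - move=> l; rewrite mem_filter mem_box; apply/andP/mapP => [[H1 H2]|[n Hn ->]].
      exists (subidx l m); first by rewrite mem_box; apply/leidxP => i; move/leidxP: H1 => /(_ i); move/leidxP: H2 => /(_ i); rewrite !ffunE; lia.
      by apply/ffunP => i; move/leidxP: H1 => /(_ i); rewrite !ffunE => H; rewrite subnKC.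
    move: Hn; rewrite mem_box => /leidxP Hn; move/leidxP: Hm => Hm.
    split; apply/leidxP => i; have := Hn i; have := Hm i; rewrite !ffunE; lia.
rewrite (perm_big _ Hp) big_map; apply: eq_bigr => n _.
by rewrite addKidx subidxD.
Qed.

Definition nidx k : nat := (\sum_(i < d) k i)%N.

Lemma nidx_sub l k : leidx l k -> l != idx0 d -> (nidx (subidx k l) < nidx k)%N.
Proof.
move=> /leidxP Hl Hl0.
have E : nidx k = (nidx (subidx k l) + nidx l)%N.
  rewrite /nidx -big_split /=; apply: eq_bigr => i _; rewrite ffunE subnK //.
rewrite E -[X in (X < _)%N]addn0 ltn_add2l.
have [i Hi] : exists i, l i != 0%N.
  apply/existsP; apply: contraR Hl0; rewrite negb_exists => /forallP H.
  by apply/eqP/ffunP => i; rewrite ffunE; move: (H i); rewrite negbK => /eqP.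
rewrite /nidx (bigD1 i) //= lt0n addn_eq0 negb_and Hi //.
Qed.

End Idx.

Lemma eq_sum_split (V : nmodType) d k (F G : idx d -> idx d -> V) :
  (forall l l', F l l' = G l l') -> sum_split k F = sum_split k G.
Proof. by move=> H; congr sum_split; do 2 (apply: functional_extensionality => ?); apply: H. Qed.

Section Ring.
Variable R : realType.
Variables d s : nat.
Local Notation mseq := (mseq R d s).
Local Notation rseq := (rseq R d).
Local Notation I := (@Iseq R d s).

Lemma mconv_assoc (A B C : mseq) : mconv (mconv A B) C = mconv A (mconv B C).
Proof.
apply: functional_extensionality => k; rewrite /mconv.
transitivity (sum_split k (fun l l' => sum_split l (fun m m' => A m *m B m' *m C l'))).
  by apply: eq_sum_split => l l'; rewrite /sum_split mulmx_suml.
rewrite sum_split_assoc; apply: eq_sum_split => m r.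
by rewrite /sum_split mulmx_sumr; apply: eq_bigr => i _; rewrite mulmxA.
Qed.

Lemma mconv1m (A : mseq) : mconv I A = A.
Proof.
apply: functional_extensionality => k; rewrite /mconv /Iseq.
rewrite -[RHS](sum_split_unitl k A); apply: eq_sum_split => l l'.
by case: eqP => _; rewrite ?mul1mx ?mul0mx.
Qed.

Lemma mconvm1 (A : mseq) : mconv A I = A.
Proof.
apply: functional_extensionality => k; rewrite /mconv /Iseq.
rewrite -[RHS](sum_split_unitr k A); apply: eq_sum_split => l l'.
by case: eqP => _; rewrite ?mulmx1 ?mulmx0.
Qed.

Lemma mconv0 (A B : mseq) : mconv A B (idx0 d) = A (idx0 d) *m B (idx0 d).
Proof. by rewrite /mconv sum_split0. Qed.

Lemma conv_inv_mul (A B : mseq) :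
  has_conv_inverse A -> has_conv_inverse B -> has_conv_inverse (mconv A B).
Proof.
move=> [A' [H1 H2]] [B' [H3 H4]]; exists (mconv B' A'); split.
  by rewrite mconv_assoc -(mconv_assoc B) H3 mconv1m.
by rewrite mconv_assoc -(mconv_assoc A') H2 mconv1m.
Qed.

Lemma conv_inv_unit0 (A : mseq) : has_conv_inverse A -> A (idx0 d) \in unitmx.
Proof.
move=> [B [H _]]; have := f_equal (fun F => F (idx0 d)) H.
rewrite /= mconv0 /Iseq eqxx => /mulmx1_unit []//.
Qed.

Definition delta : rseq := fun k => if k == idx0 d then 1 else 0.

Lemma rconv1 (f : rseq) : rconv delta f = f.
Proof.
apply: functional_extensionality => k; rewrite /rconv /delta.
rewrite -[RHS](sum_split_unitl k f); apply: eq_sum_split => l l'.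
by case: eqP => _; rewrite ?mul1r ?mul0r.
Qed.

Lemma rconvC (a b : rseq) : rconv a b = rconv b a.
Proof.
apply: functional_extensionality => k; rewrite /rconv sum_split_comm.
by apply: eq_sum_split => l l'; rewrite mulrC.
Qed.

Lemma rconvA (a b c : rseq) : rconv (rconv a b) c = rconv a (rconv b c).
Proof.
apply: functional_extensionality => k; rewrite /rconv.
transitivity (sum_split k (fun l l' => sum_split l (fun m m' => a m * b m' * c l'))).
  by apply: eq_sum_split => l l'; rewrite /sum_split mulr_suml.
rewrite sum_split_assoc; apply: eq_sum_split => m r.
by rewrite /sum_split mulr_sumr; apply: eq_bigr => i _; rewrite mulrA.
Qed.

Lemma rconvDl (a b f : rseq) k :
  rconv (fun l => a l + b l) f k = rconv a f k + rconv b f k.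
Proof. by rewrite /rconv /sum_split -big_split; apply: eq_bigr => i _; rewrite mulrDl. Qed.

Lemma rconvNl (a f : rseq) k : rconv (fun l => - a l) f k = - rconv a f k.
Proof. by rewrite /rconv /sum_split -sumrN; apply: eq_bigr => i _; rewrite mulNr. Qed.

Lemma rconv0r (a : rseq) k : rconv a (fun _ => 0) k = 0.
Proof. by rewrite /rconv /sum_split big1 // => i _; rewrite mulr0. Qed.

Lemma rconv1r (a : rseq) k : rconv a delta k = a k.
Proof. by rewrite rconvC rconv1. Qed.

Lemma rinvP (a : rseq) :
  rseq_invertible a <-> exists b, rconv a b = delta.
Proof.
split.
  move=> [B [H _]]; exists (fun k => B k ord0 ord0); apply: functional_extensionality => k.
  have := f_equal (fun F : Defs.mseq R d 1 => F k ord0 ord0) H; rewrite /mconv /Iseq /delta /= => E.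
  transitivity ((if k == idx0 d then 1%:M else 0 : 'M[R]_1) ord0 ord0); last by case: eqP; rewrite mxE.
  rewrite -E /rconv /sum_split summxE; apply: eq_bigr => i _.
  by rewrite mul_scalar_mx mxE.
move=> [b Hb]; exists (fun k => (b k)%:M); split; apply: functional_extensionality => k;
  apply/matrixP => i j; rewrite !ord1 /mconv /sum_split summxE /Iseq.
  have := f_equal (fun F => F k) Hb; rewrite /rconv /sum_split /delta /= => E.
  transitivity ((if k == idx0 d then 1 else 0) : R); last by case: eqP; rewrite mxE.
  by rewrite -E; apply: eq_bigr => l _; rewrite -scalar_mxM mxE.
have := f_equal (fun F => F k) Hb; rewrite rconvC /rconv /sum_split /delta /= => E.
transitivity ((if k == idx0 d then 1 else 0) : R); last by case: eqP; rewrite mxE.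
by rewrite -E; apply: eq_bigr => l _; rewrite -scalar_mxM mxE.
Qed.

Lemma rinv_sym (a b : rseq) : rconv a b = delta -> rconv b a = delta.
Proof. by rewrite rconvC. Qed.

Lemma rinv_get (a : rseq) : rseq_invertible a ->
  exists b, rconv a b = delta /\ rconv b a = delta /\ rseq_invertible b.
Proof.
move/rinvP => [b Hb]; exists b; split => //; split; first by rewrite rconvC.
by apply/rinvP; exists a; rewrite rconvC.
Qed.

Lemma rinvN (a : rseq) : rseq_invertible a -> rseq_invertible (fun l => - a l).
Proof.
move/rinvP => [b Hb]; apply/rinvP; exists (fun l => - b l); rewrite -Hb.
apply: functional_extensionality => k; rewrite /rconv; apply: eq_sum_split => l l'.
by rewrite mulrNN.
Qed.

Lemma rinv_delta : rseq_invertible delta.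
Proof. by apply/rinvP; exists delta; rewrite rconv1. Qed.

Fixpoint binv (a : rseq) (n : nat) (k : idx d) : R :=
  match n with
  | 0 => 0
  | n'.+1 => if k == idx0 d then (a (idx0 d))^-1
             else - (a (idx0 d))^-1 *
               \sum_(l <- box k | l != idx0 d) a l * binv a n' (subidx k l)
  end.

Lemma binv_stable (a : rseq) m k n n' :
  (nidx k < m)%N -> (nidx k < n)%N -> (nidx k < n')%N -> binv a n k = binv a n' k.
Proof.
elim: m k n n' => // m IH k [//|n] [//|n'] Hm Hn Hn' /=.
case: eqP => // _; congr (_ * _); rewrite big_seq_cond [RHS]big_seq_cond.
apply: eq_bigr => l /andP []; rewrite mem_box => Hl Hl0; congr (_ * _).
have := nidx_sub Hl Hl0 => H.
by apply: IH; apply: leq_trans H _; rewrite -ltnS.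
Qed.

Arguments binv : simpl never.

Lemma binvS (a : rseq) n k : binv a n.+1 k = if k == idx0 d then (a (idx0 d))^-1
  else - (a (idx0 d))^-1 * \sum_(l <- box k | l != idx0 d) a l * binv a n (subidx k l).
Proof. by []. Qed.

Lemma rinv_exists (a : rseq) : a (idx0 d) != 0 -> rseq_invertible a.
Proof.
move=> Ha; apply/rinvP; exists (fun k => binv a (nidx k).+1 k).
apply: functional_extensionality => k; rewrite /rconv sum_splitE.
rewrite (bigD1_seq (idx0 d)) ?box_uniq ?mem_box ?le0idx // subidx0 binvS /delta.
case: eqP => [->|/eqP Hk].
  rewrite mulfV // big_seq_cond big1; first exact: addr0.
  by move=> l /andP []; rewrite mem_box => /leidx0 -> /negP.
rewrite mulrA mulrN mulfV // mulN1r.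
rewrite /=; apply/eqP; rewrite addrC subr_eq0; apply/eqP.
rewrite big_seq_cond [RHS]big_seq_cond; apply: eq_bigr => l /andP []; rewrite mem_box => Hl Hl0.
congr (_ * _); have := nidx_sub Hl Hl0 => H.
by apply: (@binv_stable a (nidx k)).
Qed.

Definition swapS (i j : 'I_s) (A : mseq) : mseq := fun k => xrow i j (A k).
Definition scaleS (i : 'I_s) (a : rseq) (A : mseq) : mseq := fun k =>
  \matrix_(r, c) (if r == i then rconv a (fun l => A l i c) k else A k r c).
Definition addS (i j : 'I_s) (a : rseq) (A : mseq) : mseq := fun k =>
  \matrix_(r, c) (if r == j then A k j c + rconv a (fun l => A l i c) k else A k r c).

Inductive isop : (mseq -> mseq) -> Prop :=
| IOswap i j : isop (swapS i j)
| IOscale i a : rseq_invertible a -> isop (scaleS i a)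
| IOadd i j a : i != j -> rseq_invertible a -> isop (addS i j a).

Lemma elem_opP (A B : mseq) : elem_op A B <-> exists2 f, isop f & B = f A.
Proof.
split.
- case=> [i j H|i a Ha H|i j a Hij Ha H].
  + by exists (swapS i j); [constructor | apply: functional_extensionality].
  + by exists (scaleS i a); [constructor | apply: functional_extensionality].
  + by exists (addS i j a); [constructor | apply: functional_extensionality].
- move=> [f [i j|i a Ha|i j a Hij Ha] ->].
  + exact: (EOswap (i:=i) (j:=j)).
  + exact: (EOscale (i:=i) Ha).
  + exact: (EOadd Hij Ha).
Qed.

Lemma xrow_entry (M : 'M[R]_s) i j r c : xrow i j M r c = M (tperm i j r) c.
Proof. by rewrite /xrow /row_perm mxE. Qed.

Lemma isop_inv f : isop f ->
  exists2 g, isop g & (forall X, g (f X) = X /\ f (g X) = X).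
Proof.
case=> [i j|i a Ha|i j a Hij Ha].
- exists (swapS i j); first constructor.
  by move=> X; split; apply: functional_extensionality => k; apply/matrixP => r c;
    rewrite /swapS !xrow_entry tpermK.
- have [b [Hab [Hba Hb]]] := rinv_get Ha.
  exists (scaleS i b); first by constructor.
  move=> X; split; apply: functional_extensionality => k; apply/matrixP => r c;
    rewrite /scaleS !mxE; case: eqP => // ->.
    rewrite (_ : (fun l => _) = rconv a (fun l => X l i c)); last first.
      by apply: functional_extensionality => l; rewrite mxE eqxx.
    by rewrite -rconvA Hba rconv1.
  rewrite (_ : (fun l => _) = rconv b (fun l => X l i c)); last first.
    by apply: functional_extensionality => l; rewrite mxE eqxx.
  by rewrite -rconvA Hab rconv1.
- exists (addS i j (fun l => - a l)); first by constructor => //; exact: rinvN.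
  have Hji : (i == j) = false by apply/negbTE.
  move=> X; split; apply: functional_extensionality => k; apply/matrixP => r c;
    rewrite /addS !mxE; case: eqP => // ->; rewrite eqxx.
    rewrite (_ : (fun l => addS i j a X l i c) = (fun l => X l i c)); last first.
      by apply: functional_extensionality => l; rewrite mxE Hji.
    by rewrite rconvNl addrK.
  rewrite (_ : (fun l => addS i j (fun l => - a l) X l i c) = (fun l => X l i c)); last first.
    by apply: functional_extensionality => l; rewrite mxE Hji.
  by rewrite rconvNl subrK.
Qed.

Lemma mconv_entry (M X : mseq) k r c :
  mconv M X k r c = sum_split k (fun l l' => \sum_t M l r t * X l' t c).
Proof. by rewrite /mconv /sum_split summxE; apply: eq_bigr => l _; rewrite mxE. Qed.

Lemma Ientry l (r c : 'I_s) : I l r c = delta l * (r == c)%:R.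
Proof. by rewrite /Iseq /delta; case: eqP; rewrite ?mxE ?mul1r ?mul0r. Qed.

Lemma sum_deltaI (x : R) (r : 'I_s) (Y : 'I_s -> R) :
  \sum_t x * (r == t)%:R * Y t = x * Y r.
Proof.
rewrite (bigD1 r) //= eqxx mulr1 big1 ?addr0 // => t Ht.
by rewrite eq_sym (negbTE Ht) mulr0 mul0r.
Qed.

Lemma rconv_scal (a g : rseq) (e : R) k :
  rconv a (fun m => g m * e) k = rconv a g k * e.
Proof. by rewrite /rconv /sum_split mulr_suml; apply: eq_bigr => l _; rewrite mulrA. Qed.

Lemma rconv_delta_at (f : rseq) k : rconv delta f k = f k.
Proof. by rewrite rconv1. Qed.

Lemma rconv_add2 (a b f g : rseq) k :
  rconv a f k + rconv b g k = sum_split k (fun l l' => a l * f l' + b l * g l').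
Proof. by rewrite /rconv /sum_split -big_split. Qed.

Lemma isop_apply f : isop f -> forall X, f X = mconv (f I) X.
Proof.
case=> [i j|i a Ha|i j a Hij Ha] X; apply: functional_extensionality => k;
  apply/matrixP => r c; rewrite mconv_entry.
- rewrite /swapS xrow_entry -(rconv_delta_at (fun l => X l (tperm i j r) c)); apply: eq_sum_split => l l'.
  rewrite -(sum_deltaI (delta l) (tperm i j r) (fun t => X l' t c)).
  by apply: eq_bigr => t _; rewrite xrow_entry Ientry.
- rewrite /scaleS mxE; case: eqP => [->|Hr].
    apply: eq_sum_split => l l'.
    rewrite -(sum_deltaI (a l) i (fun t => X l' t c)); apply: eq_bigr => t _.
    rewrite mxE eqxx; congr (_ * _).
    rewrite (_ : (fun l0 => _) = (fun m => delta m * (i == t)%:R)) ?rconv_scal ?rconv1r //.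
    by apply: functional_extensionality => m; rewrite Ientry.
  rewrite -(rconv_delta_at (fun l => X l r c)); apply: eq_sum_split => l l'.
  rewrite -(sum_deltaI (delta l) r (fun t => X l' t c)); apply: eq_bigr => t _.
  by rewrite mxE (introF eqP Hr) Ientry.
- rewrite /addS mxE; case: eqP => [->|Hr].
    rewrite -(rconv_delta_at (fun l => X l j c)) rconv_add2; apply: eq_sum_split => l l'.
    rewrite -(sum_deltaI (delta l) j (fun t => X l' t c)).
    rewrite -(sum_deltaI (a l) i (fun t => X l' t c)) -big_split /=.
    apply: eq_bigr => t _; rewrite mxE eqxx Ientry mulrDl; congr (_ + _ * _).
    rewrite (_ : (fun l0 => _) = (fun m => delta m * (i == t)%:R)) ?rconv_scal ?rconv1r //.
    by apply: functional_extensionality => m; rewrite Ientry.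
  rewrite -(rconv_delta_at (fun l => X l r c)); apply: eq_sum_split => l l'.
  rewrite -(sum_deltaI (delta l) r (fun t => X l' t c)); apply: eq_bigr => t _.
  by rewrite mxE (introF eqP Hr) Ientry.
Qed.

End Ring.

Section Main.
Variable R : realType.
Variables d s : nat.
Local Notation mseq := (mseq R d s).
Local Notation rseq := (rseq R d).
Local Notation I := (@Iseq R d s).
Local Notation reach := (clos_refl_trans _ (@elem_op R d s)).

Lemma elem_op_sym (A B : mseq) : elem_op A B -> elem_op B A.
Proof.
move/elem_opP => [f Hf ->]; have [g Hg Hgf] := isop_inv Hf.
by apply/elem_opP; exists g => //; rewrite (proj1 (Hgf A)).
Qed.

Lemma reach_sym (A B : mseq) : reach A B -> reach B A.
Proof.
elim=> [x y H|x|x y z _ H1 _ H2]; first by apply: rt_step; exact: elem_op_sym.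
  exact: rt_refl.
exact: rt_trans H2 H1.
Qed.

Lemma row_equivI (A : mseq) : row_equiv A I <-> reach I A.
Proof. by split => [[/reach_sym|]|H] //; right. Qed.

Lemma isop_reach f (A : mseq) : isop f -> reach A (f A).
Proof. by move=> Hf; apply: rt_step; apply/elem_opP; exists f. Qed.

Lemma isop_I_inv f : isop f -> has_conv_inverse (f I).
Proof.
move=> Hf; have [g Hg Hgf] := isop_inv Hf; exists (g I); split.
  by rewrite -isop_apply // (proj2 (Hgf I)).
by rewrite -isop_apply // (proj1 (Hgf I)).
Qed.

Lemma reach_list (A : mseq) :
  reach I A <-> exists Es : seq mseq, all_elementary Es /\ A = mconv_list Es.
Proof.
split.
  move=> H0; have H := @clos_rt_rtn1 _ _ _ _ H0; clear H0; elim: H => [|y z Hyz _ [Es [HEs Ey]]]; first by exists [::].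
  move/elem_opP: Hyz => [f Hf ->]; rewrite Ey; exists (f I :: Es); split.
    by split => //; apply/elem_opP; exists f.
  by rewrite /= -isop_apply.
move=> [Es [HEs ->]]; elim: Es HEs => [_|E Es IH [HE HEs]] /=; first exact: rt_refl.
move/elem_opP: HE => [f Hf ->]; rewrite -isop_apply //.
exact: rt_trans (IH HEs) (isop_reach _ Hf).
Qed.

Lemma reach_inv (A : mseq) : reach I A -> has_conv_inverse A.
Proof.
move=> H0; have H := @clos_rt_rtn1 _ _ _ _ H0; clear H0; elim: H => [|y z Hyz _ IH].
  by exists I; rewrite mconv1m.
move/elem_opP: Hyz => [f Hf ->]; rewrite isop_apply //.
exact: conv_inv_mul (isop_I_inv Hf) IH.
Qed.

Lemma reach_unit0 (A B : mseq) : reach A B -> A (idx0 d) \in unitmx -> B (idx0 d) \in unitmx.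
Proof.
elim=> [x y H|//|x y z _ H1 _ H2]; last by move=> /H1 /H2.
move/elem_opP: H => [f Hf ->]; rewrite isop_apply // mconv0 unitmx_mul => ->.
by rewrite andbT; apply: conv_inv_unit0; exact: isop_I_inv.
Qed.

Lemma addS_comp (i j : 'I_s) (a b : rseq) (X : mseq) : i != j ->
  addS i j a (addS i j b X) = addS i j (fun l => b l + a l) X.
Proof.
move=> Hij; have Hji : (i == j) = false by apply/negbTE.
apply: functional_extensionality => k; apply/matrixP => r c; rewrite /addS !mxE.
have [Erj|Hr] := eqVneq r j.
  subst j; rewrite rconvDl addrA; congr (_ + rconv a _ k).
    by rewrite eqxx.
  by apply: functional_extensionality => l; rewrite mxE Hji.
by [].
Qed.

Lemma reach_addS (i j : 'I_s) (c : rseq) (X : mseq) : i != j -> reach X (addS i j c X).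
Proof.
move=> Hij; have [Hc|Hc] := eqVneq (c (idx0 d)) 0; last first.
  by apply: isop_reach; constructor => //; exact: rinv_exists.
set c1 := fun l => c l - (@delta R d) l.
have Hc1 : rseq_invertible c1.
  by apply: rinv_exists; rewrite /c1 Hc /delta eqxx sub0r oppr_eq0 oner_eq0.
have -> : addS i j c X = addS i j ((@delta R d)) (addS i j c1 X).
  rewrite addS_comp //; congr addS; apply: functional_extensionality => l.
  by rewrite /c1 subrK.
apply: rt_trans (isop_reach _ _) (isop_reach _ _); constructor => //.
exact: rinv_delta.
Qed.

End Main.
Lemma pivot (R : realType) s (M : 'M[R]_s) (p : 'I_s) : M \in unitmx ->
  (forall r j : 'I_s, (j < p)%N -> M r j = (r == j)%:R) ->
  exists r : 'I_s, (p <= r)%N && (M r p != 0).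
Proof.
move=> HM Hcol.
have [r Hr|H] := pickP (fun r : 'I_s => (p <= r)%N && (M r p != 0)); first by exists r.
exfalso.
pose v : 'cV[R]_s := \col_i (if i == p then 1 else if (i < p)%N then - M i p else 0).
have Mv : M *m v = 0.
  apply/matrixP => r c; rewrite !mxE.
  transitivity (\sum_i (M r i * (i == p)%:R) - \sum_i ((r == i)%:R * (if (i < p)%N then M i p else 0))).
    rewrite -sumrB; apply: eq_bigr => i _; rewrite mxE.
    have [->|Hip] := eqVneq i p; first by rewrite ltnn mulr0 subr0.
    case: ifP => Hi /=; last by rewrite !mulr0 subrr.
    by rewrite Hcol // mulr0 sub0r mulrN.
  rewrite (bigD1 p) //= eqxx mulr1 big1 ?addr0; last first.
    by move=> i Hi; rewrite (negbTE Hi) mulr0.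
  rewrite (bigD1 r) //= eqxx mul1r big1 ?addr0; last first.
    by move=> i Hi; rewrite eq_sym (negbTE Hi) mul0r.
  case: ifP => Hrp; first by rewrite subrr.
  have := H r; rewrite /= leqNgt Hrp /= => /negbFE/eqP ->.
  by rewrite subrr.
have : v = 0 by rewrite -(mulKmx HM v) Mv mulmx0.
move/matrixP => /(_ p ord0); rewrite !mxE eqxx => /eqP; by rewrite oner_eq0.
Qed.

Section Elim.
Variable R : realType.
Variables d s : nat.
Local Notation mseq := (mseq R d s).
Local Notation rseq := (rseq R d).
Local Notation I := (@Iseq R d s).
Local Notation reach := (clos_refl_trans _ (@elem_op R d s)).
Local Notation delta := (@delta R d).

Definition Inv (p : nat) (A : mseq) :=
  A (idx0 d) \in unitmx /\ forall k (r j : 'I_s), (j < p)%N -> A k r j = I k r j.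

Lemma Inv_reach p A B : Inv p A -> reach A B -> (forall k (r j : 'I_s), (j < p)%N -> B k r j = I k r j) -> Inv p B.
Proof. by move=> [HA _] HAB H; split => //; exact: reach_unit0 HAB HA. Qed.

Lemma clear_col (P : 'I_s) (A : mseq) : Inv P A -> (forall k, A k P P = delta k) ->
  forall n, exists A', reach A A' /\ Inv P A' /\ (forall k, A' k P P = delta k) /\
    (forall (q : 'I_s) k, (q < n)%N -> q != P -> A' k q P = 0).
Proof.
move=> HA HPP; elim=> [|n [A' [HAA' [HA' [HPP' Hq]]]]]; first by exists A; do !split => //; exact: rt_refl.
have [Hn|Hn] := ltnP n s; last first.
  exists A'; split => //; split => //; split => //; move=> q k _; apply: Hq; exact: leq_trans (ltn_ord q) Hn.
set q0 := Ordinal Hn.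
have [Eq0|Hq0] := eqVneq q0 P.
  exists A'; split => //; split => //; split => // q k; rewrite ltnS leq_eqVlt => /orP [/eqP Eq|]; last exact: Hq.
  by move=> HqP; exfalso; move: HqP; rewrite -Eq0; apply/negP; rewrite negbK; apply/eqP/val_inj.
set c := fun k => - A' k q0 P.
have HPj : forall j : 'I_s, (j < P)%N -> forall l, A' l P j = 0.
  move=> j Hj l; rewrite (proj2 HA') // Ientry.
  have -> : (P == j) = false by apply/eqP => E; move: Hj; rewrite E ltnn.
  by rewrite mulr0.
have Hne : P != q0 by rewrite eq_sym.
set A'' := addS P q0 c A'.
have HR : reach A' A'' := reach_addS c A' Hne.
have E'' : forall k r c', A'' k r c' = if r == q0 then A' k q0 c' + rconv c (fun l => A' l P c') k else A' k r c'.
  by move=> k r c'; rewrite /A'' /addS mxE.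
exists A''; split; first exact: rt_trans HAA' HR.
split.
  apply: (Inv_reach HA' HR) => k r j Hj; rewrite E''.
  have [->|Hr] := eqVneq r q0; last exact: (proj2 HA').
  rewrite (_ : (fun l => A' l P j) = fun _ => 0); last first.
    by apply: functional_extensionality => l; exact: HPj.
  by rewrite rconv0r addr0; exact: (proj2 HA').
split.
  move=> k; rewrite E''; have [E|_] := eqVneq P q0; last exact: HPP'.
  by move: Hne; rewrite E eqxx.
move=> q k; rewrite ltnS leq_eqVlt => /orP [/eqP Eq | Hlt] HqP; rewrite E''.
  have -> : q = q0 by apply: val_inj.
  rewrite eqxx (_ : (fun l => A' l P P) = delta); last first.
    by apply: functional_extensionality => l; exact: HPP'.
  by rewrite rconv1r /c addrN.
have [Eq|_] := eqVneq q q0; last exact: Hq.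
by move: Hlt; rewrite Eq ltnn.
Qed.


Lemma elim_step (P : 'I_s) (A : mseq) : Inv P A -> exists A', reach A A' /\ Inv P.+1 A'.
Proof.
move=> HA.
have HPj : forall j : 'I_s, (j < P)%N -> (P == j) = false.
  by move=> j Hj; apply/eqP => E; move: Hj; rewrite E ltnn.
have Hcol0 : forall r j : 'I_s, (j < P)%N -> A (idx0 d) r j = (r == j)%:R.
  by move=> r j Hj; rewrite (proj2 HA) // Ientry /delta eqxx mul1r.
have [r /andP [HPr Hr0]] := pivot (proj1 HA) Hcol0.
set A1 := swapS r P A.
have R1 : reach A A1 := isop_reach A (@IOswap _ _ _ r P).
have HA1 : Inv P A1.
  apply: (Inv_reach HA R1) => k q j Hj; rewrite /A1 /swapS xrow_entry (proj2 HA) // !Ientry.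
  congr (_ * _%:R).
  have Hrj : (r == j) = false by apply/eqP => E; move: Hj; rewrite -E ltnNge HPr.
  by case: tpermP => [->|->|] //; rewrite ?HPj ?Hrj.
set u := fun k => A1 k P P.
have Hu0 : u (idx0 d) != 0 by rewrite /u /A1 /swapS xrow_entry tpermR.
have [b [Hub [Hbu Hb]]] := rinv_get (rinv_exists Hu0).
set A2 := scaleS P b A1.
have R2 : reach A1 A2 := isop_reach A1 (@IOscale _ _ _ P b Hb).
have E2 : forall k q c, A2 k q c = if q == P then rconv b (fun l => A1 l P c) k else A1 k q c.
  by move=> k q c; rewrite mxE.
have HA2 : Inv P A2.
  apply: (Inv_reach HA1 R2) => k q j Hj; rewrite E2.
  have [->|_] := eqVneq q P; last exact: (proj2 HA1).
  rewrite (_ : (fun l => A1 l P j) = fun _ => 0) ?rconv0r.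
    by rewrite Ientry HPj // mulr0.
  by apply: functional_extensionality => l; rewrite (proj2 HA1) // Ientry HPj // mulr0.
have HPP2 : forall k, A2 k P P = delta k.
  move=> k; rewrite E2 eqxx; change (rconv b u k = delta k); by rewrite Hbu.
have [A3 [R3 [HA3 [HPP3 Hq3]]]] := clear_col HA2 HPP2 s.
exists A3; split; first by apply: rt_trans R1 _; apply: rt_trans R2 R3.
split; first exact: (proj1 HA3).
move=> k q j; rewrite ltnS leq_eqVlt => /orP [/eqP Ej|Hj]; last exact: (proj2 HA3).
have -> : j = P by apply: val_inj.
rewrite Ientry; have [->|HqP] := eqVneq q P; first by rewrite HPP3 /= mulr1.
by rewrite Hq3 ?ltn_ord //= mulr0.
Qed.

Lemma elim_all n : forall p (A : mseq), (p + n = s)%N -> Inv p A -> reach A I.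
Proof.
elim: n => [|n IH] p A Hpn HA.
  have -> : A = I; last exact: rt_refl.
  apply: functional_extensionality => k; apply/matrixP => r j; apply: (proj2 HA).
  by apply: leq_trans (ltn_ord j) _; rewrite -Hpn addn0.
have Hp : (p < s)%N by rewrite -Hpn addnS ltnS leq_addr.
have [A' [RA HA']] := elim_step (P := Ordinal Hp) HA.
apply: rt_trans RA (IH p.+1 A' _ HA'); by rewrite addSnnS.
Qed.

End Elim.

Theorem proposition4 (R : realType) (d s : nat) (A : mseq R d s) :
  (has_conv_inverse A <-> row_equiv A (@Iseq R d s)) /\
  (row_equiv A (@Iseq R d s) <->
     exists Es : seq (mseq R d s), all_elementary Es /\ A = mconv_list Es).
Proof.
split; last by rewrite row_equivI; exact: reach_list.
split => [HA|/row_equivI]; last exact: reach_inv.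
left; apply: (@elim_all R d s s 0) => //; split; first exact: conv_inv_unit0.
by [].
Qed.
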